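(* Let $0<\epsilon<\frac18$. For $M>1$ let $m_1<m_2<\cdots<m_l$ be all integers in $[M,(1+\frac1{\log M})M]$ all of whose prime power divisors $p^a$ ($p$ prime, $a\ge1$) satisfy $p^a\le M^{1/4-\epsilon}$, and let $P=\operatorname{lcm}\{p^a:\ p \text{ prime},\ a\ge1,\ p^a\le M^{1/4-\epsilon}\}$. Then there is a constant $C=C(\epsilon)>0$ such that for all sufficiently large $M$ and every real $h$, at least one of the following holds, where $I=(h-M^{3/4},h+M^{3/4})$: 1. at least $CM^{3/4}$ of the $m_i$ do not divide any integer in $I$; 2. some integer in $I$ is divisible by $P$. *)

(* Defs.v *)
From Stdlib Require Import Bool Reals ZArith Znumtheory List Lia Lra.
Open Scope R_scope.

Definition is_prime_power (q : Z) : Prop :=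
  exists p a : Z, prime p /\ (1 <= a)%Z /\ q = (p ^ a)%Z.

Definition Zrange1 (K : Z) : list Z :=
  map (fun k => Z.of_nat (S k)) (seq 0 (Z.to_nat K)).

Definition prime_power_b (q : Z) : bool :=
  existsb (fun p =>
    andb (if prime_dec p then true else false)
    (existsb (fun a => Z.eqb (p ^ a) q) (Zrange1 q)))
    (Zrange1 q).

Definition thr (eps M : R) : R := Rpower M (1/4 - eps).

Definition smooth (eps M : R) (m : Z) : Prop :=
  forall q : Z, is_prime_power q -> (q | m)%Z -> IZR q <= thr eps M.

Definition is_mi (eps M : R) (m : Z) : Prop :=
  M <= IZR m /\ IZR m <= (1 + 1 / ln M) * M /\ smooth eps M m.

(* P = lcm of all prime powers p^a <= M^(1/4-eps)
   (all of them lie in [1, floor (M^(1/4-eps))]) *)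
Definition lcm_list (l : list Z) : Z := fold_right Z.lcm 1%Z l.

Definition bigP (eps M : R) : Z :=
  lcm_list (filter prime_power_b (Zrange1 (Int_part (thr eps M)))).

Definition in_I (M h : R) (n : Z) : Prop :=
  h - Rpower M (3/4) < IZR n < h + Rpower M (3/4).

(* Main.v *)
Require Import Defs.
From Stdlib Require Import Reals ZArith Znumtheory List.
From Stdlib Require Import Lia Lra Zwf Classical.
From mathcomp Require all_boot zify.
Open Scope R_scope.

Definition isprimeb (p : Z) : bool := if prime_dec p then true else false.
Definition zpi (N : Z) : nat := length (filter isprimeb (Zrange1 N)).

Module Cheb.
Import all_boot zify.
Local Open Scope nat_scope.
Set Implicit Arguments. Unset Strict Implicit.

Lemma bin_mid_ge n : 2 ^ n <= 'C(n.*2, n).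
Proof.
elim: n => [|n IH] //.
have e : n.+1.*2 = (n.*2.+1).+1 by rewrite doubleS.
rewrite e binS.
have h3 : 'C(n.*2.+1, n.+1) = 'C(n.*2.+1, n).
  rewrite -[in RHS]bin_sub; last by lia.
  congr binomial; lia.
rewrite h3 expnS mul2n -addnn leq_add //; apply: leq_trans IH _; exact: leq_bin2l.
Qed.

Lemma div2_le n d : 0 < d -> (n.*2) %/ d <= (n %/ d).*2 + 1.
Proof.
move=> d0.
have h1 := divn_eq n d. have h2 := ltn_pmod n d0.
have h4 : n.*2 < ((n %/ d).*2 + 2) * d.
  rewrite -!mul2n; set a := n %/ d; set r := n %% d; nia.
have : (n.*2) %/ d < (n %/ d).*2 + 2 by rewrite ltn_divLR.
lia.
Qed.

Lemma count_le' N t : \sum_(1 <= k < N.+1) (k <= t) <= minn t N.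
Proof.
elim: N => [|N IH]; first by rewrite big_geq.
rewrite big_nat_recr //=.
case: (leqP N.+1 t) => h /=.
  have : minn t N = N by lia.
  move=> e; rewrite e in IH; lia.
rewrite addn0; apply: leq_trans IH _; lia.
Qed.

Lemma count_le N t : \sum_(1 <= k < N) (k <= t) <= t.
Proof.
case: N => [|N]; first by rewrite big_geq.
apply: leq_trans (count_le' N t) _; exact: geq_minl.
Qed.

Lemma logn_bin_le p n : prime p -> 0 < n -> p ^ logn p 'C(n.*2, n) <= n.*2.
Proof.
move=> pp n0.
have p1 := prime_gt1 pp.
set C := 'C(n.*2, n).
have hf : C * (n`! * n`!) = (n.*2)`!.
  have := bin_fact (leq_addr n n); rewrite addnn.
  by have -> : n.*2 - n = n by lia.
have Cpos : 0 < C by rewrite bin_gt0 -addnn leq_addr.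
have hl : logn p C + (logn p n`! + logn p n`!) = logn p (n.*2)`!.
  by rewrite -hf lognM ?muln_gt0 ?fact_gt0 // lognM ?fact_gt0.
rewrite !logn_fact // in hl.
have ext : \sum_(1 <= k < n.+1) n %/ p ^ k = \sum_(1 <= k < n.*2.+1) n %/ p ^ k.
  rewrite [RHS](big_cat_nat _ (n:=n.+1)); [|done|lia].
  rewrite [X in _ = _ + X]big1_seq ?addn0 // => k /andP[_]; rewrite mem_index_iota => /andP[hk _].
  apply: divn_small; apply: (leq_trans hk); apply: ltnW; exact: ltn_expl.
set t := trunc_log p n.*2.
have tb : \sum_(1 <= k < n.*2.+1) (n.*2) %/ p ^ k <=
          \sum_(1 <= k < n.*2.+1) ((n %/ p ^ k).*2 + (k <= t)).
  apply: leq_sum => k _.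
  case: (leqP k t) => hk.
    by apply: div2_le; rewrite expn_gt0 ltnW.
  rewrite divn_small //; apply: leq_trans (trunc_log_ltn _ p1) _.
  by rewrite leq_exp2l.
rewrite big_split /= in tb.
have ct := count_le (n.*2.+1) t.
have hd : \sum_(1 <= k < n.*2.+1) (n %/ p ^ k).*2 = (\sum_(1 <= k < n.*2.+1) n %/ p ^ k).*2.
  by rewrite (big_morph double doubleD (id2:=0%N) (erefl 0%N)).
rewrite hd -ext in tb.
have hle : logn p C <= t by lia.
apply: (@leq_trans (p ^ t)); first by rewrite leq_exp2l.
apply: trunc_logP => //; lia.
Qed.

Definition pin (N : nat) := \sum_(0 <= p < N.+1) prime p.

Lemma logn_nonprime p m : ~~ prime p -> logn p m = 0.
Proof. by move=> h; rewrite lognE (negbTE h). Qed.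

Lemma bin_le_pi n : 0 < n -> 'C(n.*2, n) <= (n.*2) ^ pin (n.*2).
Proof.
move=> n0.
set C := 'C(n.*2, n).
have Cpos : 0 < C by rewrite bin_gt0 -addnn leq_addr.
have e : C = \prod_(0 <= p < (C + n.*2).+1 | p \in predT) p ^ logn p C.
  by rewrite -widen_partn ?leq_addr // partnT.
rewrite {1}e (big_cat_nat _ (n:=(n.*2).+1)); [|done|lia].
rewrite /= [X in _ * X]big1_seq ?muln1.
  rewrite /pin expn_sum; apply: leq_prod => p _.
  case pp: (prime p).
    by rewrite expn1; apply: logn_bin_le.
  by rewrite logn_nonprime ?pp.
move=> p /andP[_]; rewrite mem_index_iota => /andP[hp _].
case pp: (prime p); last by rewrite logn_nonprime ?pp.
have h := logn_bin_le pp n0.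
case e2: (logn p C) => [|k]; first by [].
rewrite e2 in h; exfalso.
have : p <= p ^ k.+1 by rewrite -{1}(expn1 p) leq_exp2l ?prime_gt1.
lia.
Qed.

Lemma prime_bridge p : Znumtheory.prime (Z.of_nat p) <-> is_true (prime p).
Proof.
split.
- move=> hp. have hp1 : (1 < Z.of_nat p)%Z by case: hp.
  apply/primeP; split; first by apply/ltP; lia.
  move=> d /dvdnP [k hk].
  have hd := prime_divisors _ hp (Z.of_nat d).
  have : (Z.of_nat d | Z.of_nat p)%Z by exists (Z.of_nat k); rewrite hk; lia.
  move/hd => [h|[h|[h|h]]]; apply/orP.
  + lia.
  + by left; apply/eqP; lia.
  + by right; apply/eqP; lia.
  + lia.
- move=> hp. apply/prime_alt; split.
  + have := prime_gt1 hp; move/ltP; lia.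
  + move=> n hn [k hk].
    have hk0 : (0 <= k)%Z by nia.
    move/primeP: hp => [_ hd].
    have : Z.to_nat n %| p.
      apply/dvdnP; exists (Z.to_nat k).
      have e : Z.to_nat (k * n) = (Z.to_nat k * Z.to_nat n)%coq_nat by apply Z2Nat.inj_mul; lia.
      by rewrite -multE -e -hk Nat2Z.id.
    move/hd => /orP [/eqP h|/eqP h]; lia.
Qed.

Lemma isprimeb_bridge p : isprimeb (Z.of_nat p) = prime p.
Proof.
rewrite /isprimeb; case: (prime_dec (Z.of_nat p)) => h.
  by move/prime_bridge: h => ->.
by apply/esym/negP => /prime_bridge.
Qed.

Lemma pin_zpi N : pin N = zpi (Z.of_nat N).
Proof.
rewrite /zpi /Zrange1 Nat2Z.id.
elim: N => [|N IH]; first by rewrite /pin big_nat1.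
rewrite /pin big_nat_recr // -/(pin N) IH (List.seq_S N 0) List.map_app List.filter_app List.length_app /=.
by rewrite -isprimeb_bridge /=; case: (isprimeb _) => /=; rewrite ?addn0 ?addn1 //; lia.
Qed.

Lemma cheb_nat n : 0 < n -> 2 ^ n <= (n.*2) ^ zpi (Z.of_nat n.*2).
Proof. move=> n0; rewrite -pin_zpi; apply: leq_trans (bin_mid_ge n) (bin_le_pi n0). Qed.
Lemma expn_pow m n : m ^ n = Nat.pow m n.
Proof. elim: n => //= n IH; by rewrite expnS IH multE. Qed.

Lemma cheb_coq n : (0 < n)%coq_nat ->
  (Nat.pow 2 n <= Nat.pow (2*n) (zpi (Z.of_nat (2*n))))%coq_nat.
Proof.
move=> h; have h' : 0 < n by apply/ltP.
have := cheb_nat h'; rewrite !expn_pow -mul2n -multE => /leP; done.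
Qed.
End Cheb.

Definition zint (a b : Z) : list Z :=
  map (fun k => Z.of_nat (S k)) (seq (Z.to_nat a) (Z.to_nat b - Z.to_nat a)).

Lemma Zrange1_split a b : (0 <= a <= b)%Z -> Zrange1 b = Zrange1 a ++ zint a b.
Proof.
intros h. unfold Zrange1, zint. rewrite <- map_app, <- seq_app.
f_equal. f_equal. lia.
Qed.

Lemma zint_In a b x : (0 <= a)%Z -> In x (zint a b) <-> (a < x <= b)%Z.
Proof.
intros ha. unfold zint. rewrite in_map_iff. split.
- intros [k [hk hin]]. apply in_seq in hin. lia.
- intros hx. exists (Z.to_nat x - 1)%nat. split. lia. apply in_seq. lia.
Qed.

Lemma zint_NoDup a b : NoDup (zint a b).
Proof.
unfold zint. apply NoDup_map_NoDup_ForallPairs; [| apply seq_NoDup].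
intros x y _ _ e. lia.
Qed.

Lemma zpi_split a b : (0 <= a <= b)%Z ->
  (zpi b = zpi a + length (filter isprimeb (zint a b)))%nat.
Proof. intros h. unfold zpi. rewrite (Zrange1_split a b h), filter_app, length_app. reflexivity. Qed.

Lemma zpi_le a : (0 <= a)%Z -> (zpi a <= Z.to_nat a)%nat.
Proof.
intros h. unfold zpi. eapply Nat.le_trans. apply filter_length_le. unfold Zrange1. rewrite length_map, length_seq. lia.
Qed.

Lemma zpi_mono a b : (0 <= a <= b)%Z -> (zpi a <= zpi b)%nat.
Proof. intros h. rewrite (zpi_split a b h). lia. Qed.

Lemma ln_le x y : 0 < x -> x <= y -> ln x <= ln y.
Proof. intros hx [h|h]. left; apply ln_increasing; lra. subst; lra. Qed.

Lemma zcheb N : (2 <= N)%Z -> (IZR N - 1) / 2 * ln 2 <= INR (zpi N) * ln (IZR N).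
Proof.
intros hN.
set (n := Z.to_nat (N / 2)).
assert (hn1 : (1 <= n)%nat).
{ unfold n. assert (1 <= N / 2)%Z by (apply Z.div_le_lower_bound; lia). lia. }
assert (h2n : (2 * Z.of_nat n <= N /\ N - 1 <= 2 * Z.of_nat n)%Z).
{ unfold n. rewrite Z2Nat.id by (apply Z.div_pos; lia).
  pose proof (Z.mul_div_le N 2). pose proof (Z.mod_pos_bound N 2). pose proof (Z_div_mod_eq_full N 2). lia. }
pose proof (@Cheb.cheb_coq n ltac:(lia)) as hc.
change (ssrnat.muln 2 n) with (2*n)%nat in hc.
apply le_INR in hc. rewrite !pow_INR in hc.
assert (hpos : 0 < INR (2 * n)) by (apply lt_0_INR; lia).
apply ln_le in hc; [| apply pow_lt; simpl; lra].
rewrite ln_pow in hc by (simpl; lra). rewrite ln_pow in hc by exact hpos.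
assert (hz : (zpi (Z.of_nat (2 * n)) <= zpi N)%nat) by (apply zpi_mono; lia).
apply le_INR in hz.
assert (hl1 : ln (INR (2 * n)) <= ln (IZR N)).
{ apply ln_le; [lra|]. rewrite <- (Nat2Z.id (2*n)), INR_IZR_INZ, Z2Nat.id by lia. apply IZR_le; lia. }
assert (hl0 : 0 <= ln (INR (2 * n))).
{ rewrite <- ln_1. apply ln_le; [lra|]. apply (le_INR 1); lia. }
assert (hln2 : 0 < ln 2) by (rewrite <- ln_1; apply ln_increasing; lra).
assert (hnr : (IZR N - 1) / 2 <= INR n).
{ rewrite INR_IZR_INZ. destruct h2n as [_ h]. apply IZR_le in h.
  rewrite minus_IZR, mult_IZR in h. simpl in h. lra. }
assert (0 <= INR (zpi N)) by apply pos_INR.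
simpl (INR 2) in hc.
apply Rle_trans with (INR n * ln 2). { apply Rmult_le_compat_r; lra. }
apply Rle_trans with (1 := hc).
apply Rle_trans with (INR (zpi N) * ln (INR (2 * n))).
{ apply Rmult_le_compat_r; lra. }
apply Rmult_le_compat_l; lra.
Qed.


Lemma exists_prime_divisor : forall n : Z, (1 < n)%Z -> exists p, prime p /\ (p | n)%Z.
Proof.
intros n. pattern n. apply (well_founded_induction (Zwf_well_founded 0)). clear n.
intros n IH hn.
destruct (prime_dec n) as [hp|hp].
- exists n. split; auto. apply Z.divide_refl.
- destruct (not_prime_divide n hn hp) as [d [hd hdn]].
  destruct (IH d) as [p [pp pd]]. unfold Zwf. lia. lia.
  exists p. split; auto. eapply Z.divide_trans; eauto.
Qed.

Lemma rel_prime_no_common : forall x y : Z,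
  (forall p, prime p -> (p | x)%Z -> (p | y)%Z -> False) -> rel_prime x y.
Proof.
intros x y h. apply Zgcd_1_rel_prime.
pose proof (Z.gcd_nonneg x y) as hg.
destruct (Z.eq_dec (Z.gcd x y) 0) as [e|ne].
- apply Z.gcd_eq_0 in e. destruct e; subst. exfalso. apply (h 2%Z prime_2); apply Z.divide_0_r.
- destruct (Z.eq_dec (Z.gcd x y) 1) as [e1|n1]; auto.
  destruct (exists_prime_divisor (Z.gcd x y)) as [p [pp pd]]. lia.
  exfalso. apply (h p pp).
  + eapply Z.divide_trans; [exact pd| apply Z.gcd_divide_l].
  + eapply Z.divide_trans; [exact pd| apply Z.gcd_divide_r].
Qed.

Lemma prime_div_pow : forall p l (n : nat), prime p -> prime l -> (p | l ^ Z.of_nat n)%Z -> p = l.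
Proof.
intros p l n pp pl. induction n as [|n IH].
- simpl. intros hd. apply Z.divide_1_r in hd. destruct pp. lia.
- rewrite Nat2Z.inj_succ, Z.pow_succ_r by lia. intros hd.
  destruct (prime_mult p pp _ _ hd) as [h|h]; auto.
  apply prime_div_prime; auto.
Qed.

Lemma prime_div_pow' : forall p l a, prime p -> prime l -> (0 <= a)%Z -> (p | l ^ a)%Z -> p = l.
Proof.
intros p l a pp pl ha hd. rewrite <- (Z2Nat.id a) in hd by lia. eapply prime_div_pow; eauto.
Qed.

Definition prodZ (t : list Z) : Z := fold_right Z.mul 1%Z t.

Lemma prime_div_prod : forall p t, prime p -> Forall prime t -> (p | prodZ t)%Z -> In p t.
Proof.
intros p t pp. induction t as [|x t IH]; simpl; intros hf hd.
- apply Z.divide_1_r in hd. destruct pp; lia.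
- inversion hf; subst. destruct (prime_mult p pp _ _ hd) as [h|h].
  + left. symmetry. apply prime_div_prime; auto.
  + right. auto.
Qed.

Definition smoothT (T : R) (m : Z) : Prop :=
  forall q : Z, is_prime_power q -> (q | m)%Z -> IZR q <= T.

Lemma smoothT_le : forall T x, (0 < x)%Z -> IZR x <= T -> smoothT T x.
Proof.
intros T x hx hT q hq hd. destruct hq as [p [a [pp [ha e]]]].
assert (0 < q)%Z. { subst q. apply Z.pow_pos_nonneg. destruct pp; lia. lia. }
apply Z.divide_pos_le in hd; auto. apply IZR_le in hd. lra.
Qed.

Lemma pp_rel_prime : forall p a y, prime p -> (0 <= a)%Z -> ~ (p | y)%Z -> rel_prime (p ^ a) y.
Proof.
intros p a y pp ha hn. apply rel_prime_no_common. intros r pr h1 h2.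
apply (prime_div_pow' r p a pr pp ha) in h1. subst. auto.
Qed.

Lemma smoothT_mul : forall T x y, rel_prime x y -> smoothT T x -> smoothT T y -> smoothT T (x * y).
Proof.
intros T x y hr hx hy q hq hd.
destruct hq as [p [a [pp [ha e]]]].
destruct (Znumtheory.Zdivide_dec p x) as [px|px].
- assert (~ (p | y)%Z).
  { intros py. apply Zgcd_1_rel_prime in hr.
    assert (p | Z.gcd x y)%Z by (apply Z.gcd_greatest; auto). rewrite hr in H.
    apply Z.divide_1_r in H. destruct pp; lia. }
  apply hx. exists p, a; auto.
  apply Gauss with y. rewrite Z.mul_comm; auto. subst q. apply pp_rel_prime; auto; lia.
- apply hy. exists p, a; auto.
  apply Gauss with x. auto. subst q. apply pp_rel_prime; auto; lia.
Qed.


Fixpoint cart (rs : list (list Z)) : list (list Z) :=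
  match rs with
  | nil => nil :: nil
  | r :: rs' => flat_map (fun x => map (cons x) (cart rs')) r
  end.

Lemma cart_In : forall rs t, In t (cart rs) <-> Forall2 (fun x r => In x r) t rs.
Proof.
induction rs as [|r rs IH]; intros t; simpl.
- split. intros [h|[]]; subst; constructor. intros h; inversion h; auto.
- rewrite in_flat_map. split.
  + intros [x [hx ht]]. apply in_map_iff in ht. destruct ht as [t' [e ht']]. subst.
    constructor; auto. apply IH; auto.
  + intros h. inversion h; subst. exists x. split; auto. apply in_map. apply IH; auto.
Qed.

Lemma cart_NoDup : forall rs, Forall (@NoDup Z) rs -> NoDup (cart rs).
Proof.
induction rs as [|r rs IH]; intros hf; simpl.
- constructor. simpl; tauto. constructor.
- inversion hf; subst. induction r as [|x r IHr]; simpl. constructor.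
  inversion H1; subst. apply NoDup_app.
  + apply NoDup_map_NoDup_ForallPairs; [intros a b _ _ e; inversion e; auto | idtac].
    apply IH; auto.
  + apply IHr; try constructor; auto.
  + intros t h1 h2. apply in_map_iff in h1. destruct h1 as [t1 [e1 _]]. subst.
    apply in_flat_map in h2. destruct h2 as [y [hy h2]]. apply in_map_iff in h2.
    destruct h2 as [t2 [e2 _]]. inversion e2; subst. auto.
Qed.

Lemma cart_length : forall rs, length (cart rs) = fold_right (fun r acc => (length r * acc)%nat) 1%nat rs.
Proof.
induction rs as [|r rs IH]; simpl; auto.
rewrite <- IH. clear IH. induction r as [|x r IHr]; simpl; auto.
rewrite length_app, length_map, IHr. lia.
Qed.

Lemma cart_length_ge : forall rs c, 0 <= c -> (forall r, In r rs -> c <= INR (length r)) ->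
  c ^ length rs <= INR (length (cart rs)).
Proof.
intros rs c hc h. rewrite cart_length. induction rs as [|r rs IH]; simpl.
- lra.
- rewrite mult_INR. apply Rmult_le_compat; auto. apply pow_le; auto.
  apply h; simpl; auto. apply IH. intros r' hr'; apply h; simpl; auto.
Qed.

Lemma Forall2_nth : forall (t : list Z) (rs : list (list Z)), Forall2 (fun x r => In x r) t rs ->
  length t = length rs /\ forall i, (i < length rs)%nat -> In (nth i t 0%Z) (nth i rs nil).
Proof.
intros t rs h. induction h; simpl. split; auto. intros; lia.
destruct IHh as [e h']. split. lia. intros [|i] hi; simpl; auto. apply h'. lia.
Qed.

Lemma fiber3 : forall rs t1 t2 t3 (l : Z),
  (forall i k x, (i < length rs)%nat -> (k < length rs)%nat ->
     In x (nth i rs nil) -> In x (nth k rs nil) -> i = k) ->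
  In t1 (cart rs) -> In t2 (cart rs) -> In t3 (cart rs) ->
  (forall i, (i < length rs)%nat -> nth i t2 0%Z = nth i t1 0%Z \/ nth i t2 0%Z = l) ->
  (forall i, (i < length rs)%nat -> nth i t3 0%Z = nth i t1 0%Z \/ nth i t3 0%Z = l) ->
  t1 = t2 \/ t1 = t3 \/ t2 = t3.
Proof.
intros rs t1 t2 t3 l hdis h1 h2 h3 H2 H3.
apply cart_In, Forall2_nth in h1. apply cart_In, Forall2_nth in h2. apply cart_In, Forall2_nth in h3.
destruct h1 as [l1 n1], h2 as [l2 n2], h3 as [l3 n3].
destruct (classic (t1 = t2)) as [e|ne2]; [left; auto|].
destruct (classic (t1 = t3)) as [e|ne3]; [right; left; auto|].
right; right.
assert (ex2 : exists i, (i < length rs)%nat /\ nth i t2 0%Z = l).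
{ apply NNPP. intros hn. apply ne2. apply nth_ext with 0%Z 0%Z. lia.
  intros i hi. destruct (H2 i ltac:(lia)) as [e|e]; auto. exfalso; apply hn; exists i; split; auto; lia. }
assert (ex3 : exists i, (i < length rs)%nat /\ nth i t3 0%Z = l).
{ apply NNPP. intros hn. apply ne3. apply nth_ext with 0%Z 0%Z. lia.
  intros i hi. destruct (H3 i ltac:(lia)) as [e|e]; auto. exfalso; apply hn; exists i; split; auto; lia. }
destruct ex2 as [i [hi ei]], ex3 as [k [hk ek]].
assert (ik : i = k).
{ apply (hdis i k l hi hk). rewrite <- ei; auto. rewrite <- ek; auto. }
subst k.
apply nth_ext with 0%Z 0%Z. lia.
intros r hr. assert (hr' : (r < length rs)%nat) by lia.
destruct (H2 r hr') as [e2|e2]; destruct (H3 r hr') as [e3|e3].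
- congruence.
- assert (r = i). { apply (hdis r i l hr' hi). rewrite <- e3; auto. rewrite <- ei; auto. } subst. congruence.
- assert (r = i). { apply (hdis r i l hr' hi). rewrite <- e2; auto. rewrite <- ei; auto. } subst. congruence.
- congruence.
Qed.

Lemma filter_split_length : forall {A} (f : A -> bool) l,
  length l = (length (filter f l) + length (filter (fun a => negb (f a)) l))%nat.
Proof. intros A f l. induction l; simpl; auto. destruct (f a); simpl; lia. Qed.

Lemma NoDup_map_filter : forall {A B} (g : A -> B) f l, NoDup (map g l) -> NoDup (map g (filter f l)).
Proof.
intros A B g f l. induction l as [|a l IH]; simpl; intros h; auto.
inversion h; subst. destruct (f a); simpl; auto. constructor; auto.
intros hin. apply H1. apply in_map_iff in hin. destruct hin as [x [e hx]]. apply filter_In in hx.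
apply in_map_iff. exists x; split; tauto.
Qed.

Lemma count_pairs : forall (n : nat) (l : list (list Z * Z)), (length l <= n)%nat ->
  NoDup (map fst l) ->
  (forall a b c, In a l -> In b l -> In c l -> snd a = snd b -> snd b = snd c ->
     fst a = fst b \/ fst a = fst c \/ fst b = fst c) ->
  exists D, NoDup D /\ (forall y, In y D -> exists a, In a l /\ snd a = y) /\
            (length l <= 2 * length D)%nat.
Proof.
induction n as [|n IH]; intros l hl hnd htr.
- destruct l; simpl in hl; [|lia]. exists nil. simpl. split. constructor. split. tauto. lia.
- destruct l as [|x l'].
  + exists nil. simpl. split. constructor. split. tauto. lia.
  + set (y := snd x).
    set (f := fun a : list Z * Z => Z.eqb (snd a) y).
    set (l2 := filter (fun a => negb (f a)) l').
    destruct (IH l2) as [D2 [hD2 [hmem hlen]]].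
    * pose proof (filter_split_length f l'). simpl in hl. unfold l2. lia.
    * simpl in hnd. inversion hnd; subst. apply NoDup_map_filter; auto.
    * intros a b c ha hb hc. apply filter_In in ha, hb, hc. apply htr; simpl; tauto.
    * exists (y :: D2). split; [|split].
      -- constructor; auto. intros hy. destruct (hmem y hy) as [a [ha ea]].
         apply filter_In in ha. destruct ha as [_ ha]. unfold f in ha. rewrite ea, Z.eqb_refl in ha. discriminate.
      -- intros y' [e|h]. exists x; split; simpl; auto. destruct (hmem y' h) as [a [ha ea]].
         exists a. split; auto. right. apply filter_In in ha; tauto.
      -- assert (hl1 : (length (filter f l') <= 1)%nat).
         { destruct (filter f l') as [|a [|b r]] eqn:E; simpl; try lia.
           exfalso.
           assert (ha : In a (filter f l')) by (rewrite E; simpl; auto).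
           assert (hb : In b (filter f l')) by (rewrite E; simpl; auto).
           apply filter_In in ha, hb. unfold f in ha, hb.
           destruct ha as [ha ea], hb as [hb eb]. apply Z.eqb_eq in ea, eb.
           simpl in hnd. inversion hnd as [|? ? hx hnd']; subst.
           assert (hnd2 : NoDup (map fst (filter f l'))) by (apply NoDup_map_filter; auto).
           rewrite E in hnd2. simpl in hnd2. inversion hnd2 as [|? ? hab _]; subst.
           assert (fa : fst x <> fst a). { intros e; apply hx; rewrite e; apply in_map; auto. }
           assert (fb : fst x <> fst b). { intros e; apply hx; rewrite e; apply in_map; auto. }
           assert (fab : fst a <> fst b). { intros e; apply hab; rewrite e; simpl; auto. }
           destruct (htr x a b) as [e|[e|e]]; simpl; auto; try congruence. }
         pose proof (filter_split_length f l'). simpl. fold l2 in H. lia.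
Qed.


Lemma ln_lt_self : forall y, 0 < y -> ln y < y.
Proof.
intros y hy. pose proof (exp_ineq1_le (ln y)). rewrite exp_ln in H by auto. lra.
Qed.

Lemma Rpower_pos : forall M e, 0 < Rpower M e.
Proof. intros. unfold Rpower. apply exp_pos. Qed.

Lemma eventually_le : forall e c, 0 < e -> 0 <= c ->
  exists M0, forall M, M0 <= M -> 1 < M -> c * (1 + ln M) <= Rpower M e.
Proof.
intros e c he hc.
set (K := c + 2 * c / e + 1).
assert (hK : 1 <= K). { unfold K. assert (0 <= 2 * c / e). { apply Rmult_le_pos; [lra| left; apply Rinv_0_lt_compat; lra]. } lra. }
exists (Rpower K (2 / e)). intros M hM h1.
set (y := Rpower M (e / 2)).
assert (hy : K <= y).
{ unfold y. replace K with (Rpower (Rpower K (2/e)) (e/2)).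
  apply Rle_Rpower_l. lra. split; auto. apply Rpower_pos.
  rewrite Rpower_mult. replace (2 / e * (e / 2)) with 1 by (field; lra). apply Rpower_1. lra. }
assert (hyy : Rpower M e = y * y).
{ unfold y. rewrite <- Rpower_plus. f_equal. lra. }
assert (hln : ln M = (2 / e) * ln y).
{ unfold y. rewrite ln_Rpower. field. lra. }
assert (hly : ln y < y) by (apply ln_lt_self; unfold y; apply Rpower_pos).
rewrite hyy, hln.
assert (0 <= 2 * c / e). { apply Rmult_le_pos; [lra| left; apply Rinv_0_lt_compat; lra]. }
assert (c * (1 + 2 / e * ln y) <= c + 2 * c / e * y).
{ assert (c * (2 / e * ln y) <= 2 * c / e * y).
  { replace (c * (2 / e * ln y)) with (2 * c / e * ln y) by (field; lra).
    apply Rmult_le_compat_l; lra. }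
  lra. }
assert (c + 2 * c / e * y <= y * y).
{ assert (hKy : K * y <= y * y) by (apply Rmult_le_compat_r; unfold y in *; lra).
  unfold K in hKy. assert (c <= c * y) by (rewrite <- (Rmult_1_r c) at 1; apply Rmult_le_compat_l; lra).
  nra. }
lra.
Qed.

Lemma params : forall th, 1/8 < th < 1/4 -> exists (j : nat) (al rh : R),
  (1 <= j)%nat /\ 0 < al /\ 0 < rh /\
  INR j * al > 3/4 /\ (INR j + 1) * al + th > 1 /\
  INR j * (al + INR j * rh) + th < 1 /\ al + INR j * rh <= th /\ 2 * al > th.
Proof.
intros th hth.
set (r := (1 - th) / th).
assert (hr : 3 < r < 7).
{ unfold r. split; apply Rmult_lt_reg_r with th; try lra; unfold Rdiv; rewrite Rmult_assoc, Rinv_l; lra. }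
destruct (archimed r) as [u1 u2].
assert (hu : (0 <= up r)%Z). { apply le_IZR. lra. }
set (j := Z.to_nat (up r)).
assert (hj : INR j = IZR (up r)). { unfold j. rewrite INR_IZR_INZ, Z2Nat.id; auto. }
assert (hjr : r < INR j <= r + 1) by lra.
assert (hj0 : 0 < INR j) by lra.
remember (INR j) as J eqn:eJ.
set (be := (1 - th) / J).
assert (hbe_th : be < th).
{ assert (hJt : 1 - th < J * th). { assert (r * th = 1 - th) by (unfold r; field; lra).
    assert (0 < (J - r) * th) by (apply Rmult_lt_0_compat; lra). lra. }
  unfold be. replace th with ((J * th) / J) at 2 by (field; lra).
  unfold Rdiv; apply Rmult_lt_compat_r; [apply Rinv_0_lt_compat; lra| lra]. }
set (lo := Rmax (3 / (4 * J)) (Rmax ((1 - th) / (J + 1)) (th / 2))).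
assert (hlo1 : 3 / (4 * J) < be).
{ replace (3 / (4 * J)) with ((3/4) / J) by (field; lra). unfold be, Rdiv.
  apply Rmult_lt_compat_r. apply Rinv_0_lt_compat; lra. lra. }
assert (hlo2 : (1 - th) / (J + 1) < be).
{ unfold be. unfold Rdiv. apply Rmult_lt_compat_l. lra.
  apply Rinv_lt_contravar; nra. }
assert (hlo3 : th / 2 < be).
{ assert (hJ2 : J * th < 2 * (1 - th)).
  { assert (r * th = 1 - th) by (unfold r; field; lra). assert (J < 2 * r) by lra.
    assert (0 < (2 * r - J) * th) by (apply Rmult_lt_0_compat; lra). lra. }
  unfold be. replace (th / 2) with ((J * th / 2) / J) by (field; lra).
  unfold Rdiv; apply Rmult_lt_compat_r; [apply Rinv_0_lt_compat; lra| lra]. }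
assert (hlo : lo < be).
{ unfold lo. apply Rmax_lub_lt; auto. apply Rmax_lub_lt; auto. }
set (al := (lo + be) / 2).
assert (hal1 : lo < al < be) by (unfold al; lra).
assert (hlo_ge : 3 / (4 * J) <= lo /\ (1 - th) / (J + 1) <= lo /\ th / 2 <= lo).
{ unfold lo. split. apply Rmax_l. split. eapply Rle_trans; [|apply Rmax_r]. apply Rmax_l.
  eapply Rle_trans; [|apply Rmax_r]. apply Rmax_r. }
assert (hJal : J * al < 1 - th).
{ assert (J * be = 1 - th) by (unfold be; field; lra). nra. }
set (rh := Rmin ((1 - th - J * al) / (2 * (J * J))) ((th - al) / (2 * J))).
assert (hrh : 0 < rh).
{ unfold rh. apply Rmin_glb_lt; apply Rdiv_lt_0_compat; nra. }
assert (hrh1 : rh <= (1 - th - J * al) / (2 * (J * J))) by apply Rmin_l.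
assert (hrh2 : rh <= (th - al) / (2 * J)) by apply Rmin_r.
exists j, al, rh. rewrite <- eJ.
assert (hpos : 0 < th / 2). lra.
split. { apply INR_le. simpl. lra. }
split. { assert (0 <= lo) by (destruct hlo_ge as [_ [_ h]]; lra). lra. }
split. auto.
split. { destruct hlo_ge as [h _]. assert (3 / (4*J) * J = 3/4) by (field; lra). nra. }
split. { destruct hlo_ge as [_ [h _]]. assert ((1 - th) / (J + 1) * (J + 1) = 1 - th) by (field; lra). nra. }
split. { assert (J * J * rh <= (1 - th - J * al) / 2).
         { apply Rmult_le_compat_l with (r := J * J) in hrh1; [|nra].
           replace (J * J * ((1 - th - J * al) / (2 * (J * J)))) with ((1 - th - J * al) / 2) in hrh1 by (field; lra). lra. }
         nra. }
split. { assert (J * rh <= (th - al) / 2).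
         { apply Rmult_le_compat_l with (r := J) in hrh2; [|lra].
           replace (J * ((th - al) / (2 * J))) with ((th - al) / 2) in hrh2 by (field; lra). lra. }
         lra. }
destruct hlo_ge as [_ [_ h]]. lra.
Qed.


Lemma window_z : forall (A d : R) (l : Z), 0 < A -> 4 <= A * d -> prime l ->
  exists z : Z, A <= IZR z <= A * (1 + d) /\ Z.odd z = true /\ ~ (l | z)%Z.
Proof.
intros A d l hA hd pl.
destruct (archimed A) as [u1 u2].
set (z0 := up A).
set (o := if Z.odd z0 then z0 else (z0 + 1)%Z).
assert (ho : Z.odd o = true /\ A < IZR o <= A + 2).
{ unfold o. destruct (Z.odd z0) eqn:E.
  - split; auto. fold z0 in u1, u2. lra.
  - split. rewrite Z.odd_add, E. reflexivity. rewrite plus_IZR. fold z0 in u1, u2. lra. }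
destruct ho as [ho1 ho2].
assert (ho3 : Z.odd (o + 2) = true) by (rewrite Z.odd_add, ho1; reflexivity).
destruct (classic (l | o)%Z) as [h1|h1].
- exists (o + 2)%Z. split; [|split; auto].
  + rewrite plus_IZR. lra.
  + intros h2. assert (h3 : (l | 2)%Z).
    { replace 2%Z with ((o + 2) - o)%Z by ring. apply Z.divide_sub_r; auto. }
    assert (l = 2)%Z.
    { apply prime_div_prime; auto. apply prime_2. }
    subst l. apply Z.odd_spec in ho1. destruct ho1 as [k hk]. destruct h1 as [c hc]. lia.
- exists o. split; [|split; auto]. lra.
Qed.

Lemma pow2_step : forall (T : Z) (n : nat) (x : Z), (1 <= x <= T)%Z -> (T < x * 2 ^ Z.of_nat n)%Z ->
  exists k : nat, (x * 2 ^ Z.of_nat k <= T < 2 * (x * 2 ^ Z.of_nat k))%Z.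
Proof.
intros T n. induction n as [|n IH]; intros x hx hT.
- simpl in hT. lia.
- destruct (Z_le_gt_dec (2 * x) T) as [h|h].
  + assert (h1 : (1 <= 2 * x <= T)%Z) by lia.
    assert (h2 : (T < 2 * x * 2 ^ Z.of_nat n)%Z).
    { rewrite Nat2Z.inj_succ, Z.pow_succ_r in hT by lia. replace (2 * x * 2 ^ Z.of_nat n)%Z with (x * (2 * 2 ^ Z.of_nat n))%Z by ring. lia. }
    destruct (IH (2 * x)%Z h1 h2) as [k hk].
    exists (S k). rewrite Nat2Z.inj_succ, Z.pow_succ_r by lia.
    replace (x * (2 * 2 ^ Z.of_nat k))%Z with (2 * x * 2 ^ Z.of_nat k)%Z by ring. lia.
  + exists 0%nat. change (Z.of_nat 0) with 0%Z. rewrite Z.pow_0_r. lia.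
Qed.

Lemma pow2_choice : forall q T : Z, (1 <= q <= T)%Z ->
  exists k : nat, (q * 2 ^ Z.of_nat k <= T < 2 * (q * 2 ^ Z.of_nat k))%Z.
Proof.
intros q T h. apply (pow2_step T (Z.to_nat T) q h).
rewrite Z2Nat.id by lia.
assert (T < 2 ^ T)%Z by (apply Z.pow_gt_lin_r; lia).
assert (2 ^ T <= q * 2 ^ T)%Z. { assert (0 < 2 ^ T)%Z by (apply Z.pow_pos_nonneg; lia). nia. }
lia.
Qed.

Lemma lcm_list_div : forall l n, (forall x, In x l -> (x | n)%Z) -> (lcm_list l | n)%Z.
Proof.
induction l as [|x l IH]; simpl; intros n h.
- apply Z.divide_1_l.
- apply Z.lcm_least; auto.
Qed.

Lemma gap_eq : forall (M h : R) (g n1 n2 : Z), in_I M h n1 -> in_I M h n2 ->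
  (g | n1)%Z -> (g | n2)%Z -> 2 * Rpower M (3/4) <= IZR g -> n1 = n2.
Proof.
intros M h g n1 n2 [a1 b1] [a2 b2] d1 d2 hg.
destruct (Z.eq_dec n1 n2) as [e|ne]; auto. exfalso.
assert (d : (g | n1 - n2)%Z) by (apply Z.divide_sub_r; auto).
apply Zdivide_bounds in d; [|lia].
apply IZR_le in d. rewrite !abs_IZR, minus_IZR in d.
assert (0 < Rpower M (3/4)) by (unfold Rpower; apply exp_pos).
assert (Rabs (IZR n1 - IZR n2) < 2 * Rpower M (3/4)).
{ apply Rabs_def1; lra. }
assert (Rabs (IZR g) = IZR g) by (apply Rabs_right; lra).
lra.
Qed.

Lemma Zrange1_In : forall K x, In x (Zrange1 K) <-> (1 <= x <= K)%Z.
Proof.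
intros K x. unfold Zrange1. rewrite in_map_iff. split.
- intros [k [e hk]]. apply in_seq in hk. lia.
- intros hx. exists (Z.to_nat x - 1)%nat. split. lia. apply in_seq. lia.
Qed.

Lemma ppb_spec : forall q, prime_power_b q = true ->
  exists p a, prime p /\ (1 <= a)%Z /\ q = (p ^ a)%Z.
Proof.
intros q h. unfold prime_power_b in h. apply existsb_exists in h.
destruct h as [p [hp h]]. apply Bool.andb_true_iff in h. destruct h as [h1 h2].
destruct (prime_dec p) as [pp|]; [|discriminate].
apply existsb_exists in h2. destruct h2 as [a [ha e]]. apply Z.eqb_eq in e.
apply Zrange1_In in ha. exists p, a. split; auto. split; lia.
Qed.

Lemma ppb_2 : prime_power_b 2 = true.
Proof.
unfold prime_power_b. apply existsb_exists. exists 2%Z. split.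
apply Zrange1_In; lia.
destruct (prime_dec 2) as [_|n]; [|exfalso; apply n, prime_2].
simpl. reflexivity.
Qed.


Lemma In_prod_div : forall x t, In x t -> (x | prodZ t)%Z.
Proof.
intros x t. induction t as [|y t IH]; simpl; intros h. destruct h.
destruct h as [e|h]. subst. exists (prodZ t). ring.
destruct (IH h) as [c hc]. exists (y * c)%Z. rewrite hc. ring.
Qed.

Lemma prodZ_pos : forall t, Forall (fun x => 0 < x)%Z t -> (0 < prodZ t)%Z.
Proof. induction t; simpl; intros h. lia. inversion h; subst. apply Z.mul_pos_pos; auto. Qed.

Lemma smoothT_1 : forall T, smoothT T 1.
Proof.
intros T q [p [a [pp [ha e]]]] hd. exfalso.
apply Z.divide_1_r in hd. destruct pp as [p1 _].
assert (p ^ 1 <= p ^ a)%Z by (apply Z.pow_le_mono_r; lia). subst q. rewrite Z.pow_1_r in H. lia.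
Qed.

Lemma smooth_prod : forall T t, NoDup t -> Forall prime t -> Forall (fun x => IZR x <= T) t ->
  smoothT T (prodZ t).
Proof.
intros T t. induction t as [|x t IH]; simpl; intros hn hp hT.
- apply smoothT_1.
- inversion hn; subst. inversion hp; subst. inversion hT; subst.
  apply smoothT_mul; auto.
  + apply prime_rel_prime; auto. intros hd. apply prime_div_prod in hd; auto.
  + apply smoothT_le; auto. destruct H3; lia.
Qed.

Lemma cart_facts : forall rs t, In t (cart rs) ->
  length t = length rs /\ (forall i, (i < length rs)%nat -> In (nth i t 0%Z) (nth i rs nil)) /\
  (forall x, In x t -> exists r, In r rs /\ In x r).
Proof.
intros rs t h. apply cart_In in h. pose proof (Forall2_nth _ _ h) as [e hn].
split; auto. split; auto.
intros x hx. apply In_nth with (d := 0%Z) in hx. destruct hx as [i [hi ex]].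
exists (nth i rs nil). split. apply nth_In. lia. rewrite <- ex. apply hn. lia.
Qed.

Lemma cart_NoDup_t : forall rs t, In t (cart rs) ->
  (forall i k x, (i < length rs)%nat -> (k < length rs)%nat -> In x (nth i rs nil) -> In x (nth k rs nil) -> i = k) ->
  NoDup t.
Proof.
intros rs t h hdis. destruct (cart_facts rs t h) as [e [hn _]].
apply (NoDup_nth t 0%Z). intros i k hi hk eik.
apply (hdis i k (nth i t 0%Z)); try lia. apply hn; lia. rewrite eik. apply hn; lia.
Qed.

Lemma le_div_r : forall a b c, 0 < c -> a * c <= b -> a <= b / c.
Proof. intros a b c hc h. apply Rmult_le_reg_r with c; auto. unfold Rdiv. rewrite Rmult_assoc, Rinv_l; lra. Qed.

Lemma div_lt_l : forall a b c, 0 < c -> a < b * c -> a / c < b.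
Proof. intros a b c hc h. apply Rmult_lt_reg_r with c; auto. unfold Rdiv. rewrite Rmult_assoc, Rinv_l; lra. Qed.

Lemma row_elem : forall (M T : R) (Tn : Z) (rs : list (list Z)) (v0 : R) (t : list Z) (q : Z),
  1 < M -> IZR Tn <= T -> T < IZR Tn + 1 -> (2 <= Tn)%Z ->
  2 <= v0 -> v0 <= T -> T < v0 * v0 ->
  (forall r x, In r rs -> In x r -> prime x /\ v0 < IZR x /\ IZR x <= T) ->
  (forall i k x, (i < length rs)%nat -> (k < length rs)%nat -> In x (nth i rs nil) -> In x (nth k rs nil) -> i = k) ->
  In t (cart rs) ->
  4 * ln M * IZR (prodZ t) * T <= M ->
  2 * M * (1 + 1 / ln M) <= v0 * IZR (prodZ t) * T ->
  In q (filter prime_power_b (Zrange1 Tn)) -> ~ (q | prodZ t)%Z ->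
  exists m, (M <= IZR m /\ IZR m <= (1 + 1 / ln M) * M) /\ smoothT T m /\ (q | m)%Z /\ (prodZ t | m)%Z /\
   exists l, forall t', In t' (cart rs) -> (prodZ t' | m)%Z -> forall i, (i < length rs)%nat ->
      nth i t' 0%Z = nth i t 0%Z \/ nth i t' 0%Z = l.
Proof.
intros M T Tn rs v0 t q hM hT1 hT2 hTn hv0 hv0T hvv hrs hdis ht hwin hzb hq hnq.
assert (hL : 0 < ln M) by (rewrite <- ln_1; apply ln_increasing; lra).
destruct (cart_facts rs t ht) as [hlen [hnth hmem]].
assert (ht_el : forall x, In x t -> prime x /\ v0 < IZR x /\ IZR x <= T).
{ intros x hx. destruct (hmem x hx) as [r [hr hxr]]. apply (hrs r); auto. }
assert (hnd : NoDup t) by (apply (cart_NoDup_t rs); auto).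
assert (hpt : Forall prime t) by (apply Forall_forall; intros x hx; apply ht_el; auto).
set (g := prodZ t).
assert (hg0 : (0 < g)%Z).
{ apply prodZ_pos, Forall_forall. intros x hx. destruct (ht_el x hx) as [[p1 _] _]. lia. }
assert (hg_t : forall r, prime r -> (r | g)%Z -> In r t) by (intros; apply prime_div_prod; auto).
assert (hg2 : ~ (2 | g)%Z).
{ intros h. apply hg_t in h; [|apply prime_2]. destruct (ht_el 2%Z h) as [_ [h1 _]]. lra. }
apply filter_In in hq. destruct hq as [hq1 hq2].
apply Zrange1_In in hq1.
destruct (ppb_spec q hq2) as [l [a [pl [ha eq]]]].
assert (hl1 : (1 < l)%Z) by (destruct pl; lia).
assert (hlg : ~ (l | g)%Z).
{ intros hd. apply hg_t in hd; auto. destruct (ht_el l hd) as [_ [hvl _]].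
  destruct (Z.eq_dec a 1) as [ea|ea].
  - apply hnq. subst q a. rewrite Z.pow_1_r. fold g. apply In_prod_div; auto.
  - assert (hq2' : (l ^ 2 <= q)%Z) by (subst q; apply Z.pow_le_mono_r; lia).
    replace (l ^ 2)%Z with (l * l)%Z in hq2' by ring.
    apply IZR_le in hq2'. rewrite mult_IZR in hq2'.
    assert (v0 * v0 < IZR l * IZR l) by nra.
    assert (IZR q <= IZR Tn) by (apply IZR_le; lia). lra. }
destruct (pow2_choice q Tn ltac:(lia)) as [k hk].
set (b := (q * 2 ^ Z.of_nat k)%Z).
assert (hb1 : (1 <= b)%Z). { unfold b. assert (0 < 2 ^ Z.of_nat k)%Z by (apply Z.pow_pos_nonneg; lia). nia. }
assert (hbT : IZR b <= T) by (apply Rle_trans with (IZR Tn); auto; apply IZR_le; unfold b; lia).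
assert (hbT2 : T < 2 * IZR b).
{ assert (Tn + 1 <= 2 * b)%Z by (unfold b; lia). apply IZR_le in H. rewrite plus_IZR, mult_IZR in H. simpl in H. lra. }
assert (hgR : 0 < IZR g) by (apply IZR_lt; auto).
assert (hbR : 1 <= IZR b) by (apply IZR_le; auto).
set (A := M / (IZR g * IZR b)).
assert (hA : 0 < A) by (unfold A; apply Rdiv_lt_0_compat; nra).
assert (hAd : 4 <= A * (1 / ln M)).
{ unfold A. replace (M / (IZR g * IZR b) * (1 / ln M)) with (M / (ln M * IZR g * IZR b)) by (field; nra).
  assert (hp3 : 0 < ln M * IZR g) by (apply Rmult_lt_0_compat; lra).
  apply le_div_r. apply Rmult_lt_0_compat; lra.
  assert (ln M * IZR g * IZR b <= ln M * IZR g * T) by (apply Rmult_le_compat_l; lra). fold g in hwin.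
  replace (4 * ln M * IZR g * T) with (4 * (ln M * IZR g * T)) in hwin by ring. lra. }
destruct (window_z A (1 / ln M) l hA hAd pl) as [z [[hz1 hz2] [hzodd hzl]]].
assert (hz0 : (1 <= z)%Z). { assert (0 < IZR z) by lra. apply lt_IZR in H. lia. }
assert (hzv : IZR z < v0).
{ apply Rle_lt_trans with (1 := hz2). unfold A.
  replace (M / (IZR g * IZR b) * (1 + 1 / ln M)) with (M * (1 + 1 / ln M) / (IZR g * IZR b)) by (field; nra).
  apply div_lt_l; [nra|]. fold g in hzb.
  assert (v0 * IZR g * T < v0 * IZR g * (2 * IZR b)) by (apply Rmult_lt_compat_l; nra). nra. }
assert (hzT : IZR z <= T) by lra.
set (m := (g * b * z)%Z).
exists m.
split.
{ unfold m. rewrite !mult_IZR.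
  assert (e1 : A * (IZR g * IZR b) = M) by (unfold A; field; nra).
  assert (hgb : 0 <= IZR g * IZR b) by (apply Rmult_le_pos; lra).
  replace (IZR g * IZR b * IZR z) with (IZR z * (IZR g * IZR b)) by ring.
  split.
  - pattern M at 1. rewrite <- e1. apply Rmult_le_compat_r; lra.
  - assert (e2 : (1 + 1 / ln M) * M = (A * (1 + 1 / ln M)) * (IZR g * IZR b)).
    { transitivity ((1 + 1 / ln M) * (A * (IZR g * IZR b))). rewrite e1; reflexivity. ring. }
    rewrite e2.
    apply Rmult_le_compat_r; lra. }
assert (hrgb : rel_prime g b).
{ apply rel_prime_no_common. intros r pr hrg hrb.
  unfold b in hrb. destruct (prime_mult r pr _ _ hrb) as [h|h].
  - subst q. apply (prime_div_pow' r l a pr pl) in h; [|lia]. subst r. auto.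
  - apply (prime_div_pow' r 2 (Z.of_nat k) pr prime_2) in h; [|lia]. subst r. auto. }
assert (hrgbz : rel_prime (g * b) z).
{ apply rel_prime_no_common. intros r pr hr hrz.
  destruct (prime_mult r pr _ _ hr) as [h|h].
  - apply hg_t in h; auto. destruct (ht_el r h) as [_ [hvr _]].
    apply Z.divide_pos_le in hrz; [|lia]. apply IZR_le in hrz. lra.
  - unfold b in h. destruct (prime_mult r pr _ _ h) as [h'|h'].
    + subst q. apply (prime_div_pow' r l a pr pl) in h'; [|lia]. subst r. auto.
    + apply (prime_div_pow' r 2 (Z.of_nat k) pr prime_2) in h'; [|lia]. subst r.
      destruct hrz as [c hc]. rewrite hc in hzodd. rewrite Z.odd_mul in hzodd. simpl in hzodd.
      rewrite Bool.andb_false_r in hzodd. discriminate. }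
split.
{ unfold m. apply smoothT_mul; auto. apply smoothT_mul; auto.
  - apply smooth_prod; auto. apply Forall_forall; intros x hx; apply ht_el; auto.
  - apply smoothT_le; auto. lia.
  - apply smoothT_le; auto. lia. }
split. { unfold m, b. exists (g * 2 ^ Z.of_nat k * z)%Z. ring. }
split. { unfold m. exists (b * z)%Z. fold g. ring. }
exists l. intros t' ht' hd i hi.
destruct (cart_facts rs t' ht') as [hlen' [hnth' _]].
set (p := nth i t' 0%Z).
assert (hpin : In p (nth i rs nil)) by (apply hnth'; auto).
assert (hri : In (nth i rs nil) rs) by (apply nth_In; lia).
destruct (hrs (nth i rs nil) p hri hpin) as [pp [hvp _]].
assert (hpm : (p | m)%Z).
{ eapply Z.divide_trans; [|exact hd]. apply In_prod_div. apply nth_In. lia. }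
unfold m in hpm.
destruct (prime_mult p pp _ _ hpm) as [h|h].
- destruct (prime_mult p pp _ _ h) as [h'|h'].
  + left. apply hg_t in h'; auto. apply (In_nth t p 0%Z) in h'. destruct h' as [k' [hk' ek]].
    assert (k' = i). { apply (hdis k' i p); try lia. rewrite <- ek. apply hnth. lia. auto. }
    subst k'. auto.
  + unfold b in h'. destruct (prime_mult p pp _ _ h') as [h''|h''].
    * right. subst q. apply (prime_div_pow' p l a pp pl) in h''; [auto|lia].
    * apply (prime_div_pow' p 2 (Z.of_nat k) pp prime_2) in h''; [|lia].
      exfalso. rewrite h'' in hvp. simpl in hvp. lra.
- exfalso. apply Z.divide_pos_le in h; [|lia]. apply IZR_le in h. lra.
Qed.


Lemma Rpower_pow_n : forall M x (n : nat), 0 < M -> (Rpower M x) ^ n = Rpower M (INR n * x).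
Proof.
intros M x n hM. rewrite <- Rpower_pow by apply Rpower_pos. rewrite Rpower_mult. f_equal. ring.
Qed.

Lemma Int_part_mono : forall x y, x <= y -> (Int_part x <= Int_part y)%Z.
Proof.
intros x y h. pose proof (base_Int_part x). pose proof (base_Int_part y).
assert (IZR (Int_part x) < IZR (Int_part y) + 1) by lra.
rewrite <- plus_IZR in H1. apply lt_IZR in H1. lia.
Qed.

Lemma prod_bounds : forall (lo hi : R) t, 0 < lo ->
  (forall x, In x t -> lo < IZR x <= hi) ->
  lo ^ length t <= IZR (prodZ t) <= hi ^ length t.
Proof.
intros lo hi t hlo. induction t as [|x t IH]; simpl; intros h.
- lra.
- rewrite mult_IZR. destruct (h x (or_introl eq_refl)) as [h1 h2].
  destruct IH as [i1 i2]. intros y hy; apply h; auto.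
  assert (0 <= lo ^ length t) by (apply pow_le; lra).
  split. apply Rmult_le_compat; lra. apply Rmult_le_compat; try lra.
Qed.

Lemma choose_list : forall (R : list Z -> Z -> Prop) (l : list (list Z)),
  (forall t, In t l -> exists m, R t m) ->
  exists lp : list (list Z * Z), map fst lp = l /\ forall p, In p lp -> R (fst p) (snd p).
Proof.
intros R l. induction l as [|t l IH]; intros h.
- exists nil. simpl. split; auto. tauto.
- destruct (h t (or_introl eq_refl)) as [m hm].
  destruct IH as [lp [e hp]]. intros t' ht'; apply h; simpl; auto.
  exists ((t, m) :: lp). simpl. rewrite e. split; auto.
  intros p [<-|hp']; simpl; auto.
Qed.

Lemma range_count : forall (M lo P : R), 1 < M -> 2 <= lo -> lo * P <= M -> 8 * ln M + 2 <= P ->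
  lo <= INR (length (filter isprimeb (zint (Int_part lo) (Int_part (lo * P))))).
Proof.
intros M lo P hM hlo hhi hP.
assert (hL : 0 < ln M) by (rewrite <- ln_1; apply ln_increasing; lra).
set (hi := lo * P).
assert (hhiM : hi <= M) by (unfold hi; lra).
pose proof (base_Int_part lo) as [a1 a2].
pose proof (base_Int_part hi) as [b1 b2].
set (A := Int_part lo) in *. set (B := Int_part hi) in *.
assert (hhi8 : hi >= 8 * lo * ln M + 2 * lo) by (unfold hi; nra).
assert (hA0 : (2 <= A)%Z). { assert (IZR 1 < IZR A) by (simpl; lra). apply lt_IZR in H. lia. }
assert (hAB : (A <= B)%Z). { unfold A, B. apply Int_part_mono. unfold hi. nra. }
assert (hB2 : (2 <= B)%Z) by lia.
pose proof (zpi_split A B ltac:(lia)) as hs.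
set (c := length (filter isprimeb (zint A B))) in *.
pose proof (zpi_le A ltac:(lia)) as hzA.
apply le_INR in hzA. rewrite (INR_IZR_INZ (Z.to_nat A)), Z2Nat.id in hzA by lia.
pose proof (zcheb B hB2) as hc.
assert (hBR : 2 <= IZR B) by (apply IZR_le; auto).
assert (hlB0 : 0 < ln (IZR B)) by (rewrite <- ln_1; apply ln_increasing; lra).
assert (hlB : ln (IZR B) <= ln M) by (apply ln_le; lra).
assert (hx0 : 0 <= INR (zpi B)) by apply pos_INR.
assert (h2 : / 2 < ln 2) by apply ln_lt_2.
assert (hxL : (hi - 2) / 4 <= INR (zpi B) * ln M).
{ assert (INR (zpi B) * ln (IZR B) <= INR (zpi B) * ln M) by (apply Rmult_le_compat_l; lra).
  assert ((IZR B - 1) / 2 * ln 2 >= (IZR B - 1) / 2 * / 2).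
  { apply Rle_ge, Rmult_le_compat_l; lra. }
  lra. }
assert (hx : 2 * lo <= INR (zpi B)).
{ apply Rmult_le_reg_r with (ln M); auto. nra. }
rewrite hs, plus_INR in hx. lra.
Qed.

Definition Tag (rs : list (list Z)) (t : list Z) (m : Z) : Prop :=
  (prodZ t | m)%Z /\ exists l, forall t', In t' (cart rs) -> (prodZ t' | m)%Z -> forall i, (i < length rs)%nat ->
      nth i t' 0%Z = nth i t 0%Z \/ nth i t' 0%Z = l.

Lemma hub_split : forall (eps M h v0 : R) (rs : list (list Z)) (t : list Z),
  1 < M -> IZR (Int_part (thr eps M)) <= thr eps M -> thr eps M < IZR (Int_part (thr eps M)) + 1 ->
  (2 <= Int_part (thr eps M))%Z ->
  2 <= v0 -> v0 <= thr eps M -> thr eps M < v0 * v0 ->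
  (forall r x, In r rs -> In x r -> prime x /\ v0 < IZR x /\ IZR x <= thr eps M) ->
  (forall i k x, (i < length rs)%nat -> (k < length rs)%nat -> In x (nth i rs nil) -> In x (nth k rs nil) -> i = k) ->
  In t (cart rs) ->
  4 * ln M * IZR (prodZ t) * thr eps M <= M ->
  2 * M * (1 + 1 / ln M) <= v0 * IZR (prodZ t) * thr eps M ->
  2 * Rpower M (3/4) <= IZR (prodZ t) ->
  (exists m, is_mi eps M m /\ ~ (exists n, in_I M h n /\ (m | n)%Z) /\ Tag rs t m)
  \/ (exists n, in_I M h n /\ (bigP eps M | n)%Z).
Proof.
intros eps M h v0 rs t hM hT1 hT2 hTn hv0 hv0T hvv hrs hdis ht hwin hzb hgap.
set (T := thr eps M) in *. set (Tn := Int_part T) in *.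
set (Qs := filter prime_power_b (Zrange1 Tn)).
set (g := prodZ t) in *.
destruct (classic (exists q m, In q Qs /\ ~ (q | g)%Z /\
   ((M <= IZR m /\ IZR m <= (1 + 1 / ln M) * M) /\ smoothT T m /\ (q | m)%Z /\ Tag rs t m) /\
   ~ (exists n, in_I M h n /\ (m | n)%Z))) as [H|H].
- left. destruct H as [q [m [_ [_ [[hb [hs [_ htag]]] hbad]]]]].
  exists m. split; [|split; auto]. unfold is_mi, smooth. split; [tauto|split; [tauto|]]. exact hs.
- right.
  destruct (cart_facts rs t ht) as [_ [_ hmem]].
  assert (hg2 : ~ (2 | g)%Z).
  { intros hd. apply prime_div_prod in hd; [|apply prime_2|].
    - destruct (hmem 2%Z hd) as [r [hr hx]]. destruct (hrs r 2%Z hr hx) as [_ [hh _]]. lra.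
    - apply Forall_forall. intros x hx. destruct (hmem x hx) as [r [hr hxr]]. apply (hrs r x hr hxr). }
  assert (h2Q : In 2%Z Qs). { unfold Qs. apply filter_In. split. apply Zrange1_In. lia. apply ppb_2. }
  assert (good : forall q m, In q Qs -> ~ (q | g)%Z ->
     ((M <= IZR m /\ IZR m <= (1 + 1 / ln M) * M) /\ smoothT T m /\ (q | m)%Z /\ Tag rs t m) ->
     exists n, in_I M h n /\ (m | n)%Z).
  { intros q m hq hqg hr. apply NNPP. intros hn. apply H. exists q, m. tauto. }
  destruct (row_elem M T Tn rs v0 t 2%Z hM hT1 hT2 hTn hv0 hv0T hvv hrs hdis ht hwin hzb h2Q hg2)
    as [m2 [hb2 [hs2 [hq2 [hg2m hl2]]]]].
  destruct (good 2%Z m2 h2Q hg2) as [n0 [hn0 hd0]].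
  { split; auto. split; auto. split; auto. split; auto. }
  exists n0. split; auto.
  unfold bigP. fold T Tn. fold Qs. apply lcm_list_div. intros q hq.
  destruct (Znumtheory.Zdivide_dec q g) as [hqg|hqg].
  + eapply Z.divide_trans. exact hqg. eapply Z.divide_trans. exact hg2m. exact hd0.
  + destruct (row_elem M T Tn rs v0 t q hM hT1 hT2 hTn hv0 hv0T hvv hrs hdis ht hwin hzb hq hqg)
      as [mq [hbq [hsq [hqq [hgq hlq]]]]].
    destruct (good q mq hq hqg) as [nq [hnq hdq]].
    { split; auto. split; auto. split; auto. split; auto. }
    assert (e : nq = n0).
    { apply (gap_eq M h g nq n0 hnq hn0); auto.
      eapply Z.divide_trans. exact hgq. exact hdq.
      eapply Z.divide_trans. exact hg2m. exact hd0. }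
    subst nq. eapply Z.divide_trans. exact hqq. exact hdq.
Qed.

Lemma Rmax_le_inv : forall a b c, Rmax a b <= c -> a <= c /\ b <= c.
Proof. intros a b c h. split; eapply Rle_trans; [apply Rmax_l| exact h| apply Rmax_r| exact h]. Qed.

Lemma Rpower_ge1 : forall M e, 1 < M -> 0 <= e -> 1 <= Rpower M e.
Proof. intros M e hM he. rewrite <- (Rpower_O M) by lra. apply Rle_Rpower; lra. Qed.

Theorem lemma4 :
  forall eps : R, 0 < eps < 1/8 ->
  exists C : R, 0 < C /\
  exists M0 : R, forall M : R, 1 < M -> M0 <= M ->
  forall h : R,
    (* 1. at least C M^(3/4) of the m_i divide no integer of I *)
    (exists L : list Z, NoDup L /\
       (forall m, In m L ->
          is_mi eps M m /\ ~ (exists n : Z, in_I M h n /\ (m | n)%Z)) /\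
       C * Rpower M (3/4) <= INR (length L))
    \/
    (* 2. some integer of I is divisible by P *)
    (exists n : Z, in_I M h n /\ (bigP eps M | n)%Z).
Proof.
intros eps [he1 he2].
assert (hth : 1/8 < 1/4 - eps < 1/4) by lra.
destruct (params (1/4 - eps) hth) as [j [al [rh [hj [hal [hrh [P1 [P2 [P3 [P4 P5]]]]]]]]]].
remember (INR j) as J eqn:eJ.
assert (hJ1 : 1 <= J) by (rewrite eJ; apply (le_INR 1); auto).
exists 1. split; [lra|].
destruct (eventually_le (1/4 - eps) 2 ltac:(lra) ltac:(lra)) as [M1 HM1].
destruct (eventually_le al 2 hal ltac:(lra)) as [M2 HM2].
destruct (eventually_le (1 - (J * (al + J * rh) + (1/4 - eps))) 4 ltac:(lra) ltac:(lra)) as [M3 HM3].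
destruct (eventually_le ((J + 1) * al + (1/4 - eps) - 1) 4 ltac:(lra) ltac:(lra)) as [M4 HM4].
destruct (eventually_le (J * al - 3/4) 2 ltac:(lra) ltac:(lra)) as [M5 HM5].
destruct (eventually_le rh 10 hrh ltac:(lra)) as [M6 HM6].
exists (Rmax (exp 1) (Rmax M1 (Rmax M2 (Rmax M3 (Rmax M4 (Rmax M5 M6)))))).
intros M hM hM0 h.
apply Rmax_le_inv in hM0 as [hE hM0]. apply Rmax_le_inv in hM0 as [hM1 hM0].
apply Rmax_le_inv in hM0 as [hM2 hM0]. apply Rmax_le_inv in hM0 as [hM3 hM0].
apply Rmax_le_inv in hM0 as [hM4 hM0]. apply Rmax_le_inv in hM0 as [hM5 hM6].
specialize (HM1 M hM1 hM). specialize (HM2 M hM2 hM). specialize (HM3 M hM3 hM).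
specialize (HM4 M hM4 hM). specialize (HM5 M hM5 hM). specialize (HM6 M hM6 hM).
assert (hL1 : 1 <= ln M). { rewrite <- (ln_exp 1). apply ln_le; auto. apply exp_pos. }
assert (hM0' : 0 < M) by lra.
set (T := thr eps M).
assert (eT : T = Rpower M (1/4 - eps)) by reflexivity.
assert (hT2 : 2 <= T) by (rewrite eT; lra).
set (v0 := Rpower M al).
assert (hv0 : 2 <= v0) by (unfold v0; lra).
set (P := Rpower M rh).
assert (hP : 8 * ln M + 2 <= P) by (unfold P; lra).
assert (hP1 : 1 <= P) by lra.
assert (hPj : P ^ j = Rpower M (J * rh)) by (unfold P; rewrite Rpower_pow_n by lra; rewrite eJ; reflexivity).
set (vv := fun i : nat => v0 * P ^ i).
assert (hvvj : vv j = Rpower M (al + J * rh)) by (unfold vv, v0; rewrite hPj, <- Rpower_plus; reflexivity).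
assert (hvvT : vv j <= T) by (rewrite hvvj, eT; apply Rle_Rpower; lra).
assert (hvv_mono : forall i k, (i <= k)%nat -> vv i <= vv k).
{ intros i k hik. unfold vv. apply Rmult_le_compat_l. lra. apply Rle_pow; auto. }
assert (hvv0 : forall i, v0 <= vv i).
{ intros i. replace v0 with (vv 0%nat) at 1 by (unfold vv; simpl; ring). apply hvv_mono. lia. }
assert (hTM : T <= M). { rewrite eT. rewrite <- (Rpower_1 M) at 2 by lra. apply Rle_Rpower; lra. }
assert (hv0T : v0 <= T) by (apply Rle_trans with (vv j); auto).
assert (hvv2 : T < v0 * v0).
{ unfold v0. rewrite <- Rpower_plus, eT. apply Rpower_lt; lra. }
set (Tn := Int_part T).
pose proof (base_Int_part T) as [bT1 bT2]. fold Tn in bT1, bT2.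
assert (hTn : (2 <= Tn)%Z). { assert (IZR 1 < IZR Tn) by (simpl; lra). apply lt_IZR in H. lia. }
set (a := fun i : nat => Int_part (vv i)).
set (R := fun i : nat => filter isprimeb (zint (a i) (a (S i)))).
set (rs := map R (seq 0 j)).
assert (hlen : length rs = j) by (unfold rs; rewrite length_map, length_seq; auto).
assert (hnth : forall i, (i < j)%nat -> nth i rs nil = R i).
{ intros i hi. unfold rs. rewrite (nth_indep _ nil (R 0%nat)) by (rewrite length_map, length_seq; lia).
  rewrite map_nth, seq_nth; auto. }
assert (ha0 : forall i, (1 <= a i)%Z).
{ intros i. unfold a. pose proof (base_Int_part (vv i)) as [c1 c2]. pose proof (hvv0 i).
  assert (IZR 0 < IZR (Int_part (vv i))) by (simpl; lra). apply lt_IZR in H0. lia. }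
assert (hRmem : forall i x, In x (R i) -> prime x /\ vv i < IZR x /\ IZR x <= vv (S i)).
{ intros i x hx. unfold R in hx. apply filter_In in hx. destruct hx as [hx hp].
  apply zint_In in hx; [|specialize (ha0 i); lia].
  split. { unfold isprimeb in hp. destruct (prime_dec x); auto; discriminate. }
  unfold a in hx. pose proof (base_Int_part (vv i)) as [c1 c2]. pose proof (base_Int_part (vv (S i))) as [d1 d2].
  destruct hx as [hx1 hx2]. assert (hx1' : (Int_part (vv i) + 1 <= x)%Z) by lia. apply IZR_le in hx1'. apply IZR_le in hx2.
  rewrite plus_IZR in hx1'. split; lra. }
assert (hrs : forall r x, In r rs -> In x r -> prime x /\ v0 < IZR x /\ IZR x <= vv j).
{ intros r x hr hx. unfold rs in hr. apply in_map_iff in hr. destruct hr as [i [e hi]]. subst r.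
  apply in_seq in hi. destruct (hRmem i x hx) as [h1 [h2 h3]]. split; auto. split.
  - pose proof (hvv0 i). lra.
  - apply Rle_trans with (vv (S i)); auto. apply hvv_mono. lia. }
assert (hrsT : forall r x, In r rs -> In x r -> prime x /\ v0 < IZR x /\ IZR x <= T).
{ intros r x hr hx. destruct (hrs r x hr hx) as [h1 [h2 h3]]. split; auto. split; auto. lra. }
assert (hdis : forall i k x, (i < length rs)%nat -> (k < length rs)%nat ->
          In x (nth i rs nil) -> In x (nth k rs nil) -> i = k).
{ intros i k x hi hk hxi hxk. rewrite hlen in hi, hk. rewrite hnth in hxi, hxk by auto.
  destruct (hRmem i x hxi) as [_ [i1 i2]]. destruct (hRmem k x hxk) as [_ [k1 k2]].
  destruct (Nat.lt_trichotomy i k) as [c|[c|c]]; auto; exfalso.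
  - assert (vv (S i) <= vv k) by (apply hvv_mono; lia). lra.
  - assert (vv (S k) <= vv i) by (apply hvv_mono; lia). lra. }
assert (hcount : forall r, In r rs -> v0 <= INR (length r)).
{ intros r hr. unfold rs in hr. apply in_map_iff in hr. destruct hr as [i [e hi]]. subst r.
  apply in_seq in hi.
  assert (hvi : vv i * P <= M).
  { replace (vv i * P) with (vv (S i)) by (unfold vv; simpl; ring).
    apply Rle_trans with (vv j). apply hvv_mono; lia. lra. }
  pose proof (range_count M (vv i) P hM ltac:(pose proof (hvv0 i); lra) hvi hP) as hc.
  unfold R, a. replace (vv (S i)) with (vv i * P) by (unfold vv; simpl; ring).
  pose proof (hvv0 i). lra. }
assert (hcart : v0 ^ j <= INR (length (cart rs))).
{ rewrite <- hlen. apply cart_length_ge; auto. lra. }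
assert (hv0j : v0 ^ j = Rpower M (J * al)) by (unfold v0; rewrite Rpower_pow_n by lra; rewrite eJ; reflexivity).
assert (h34 : 2 * Rpower M (3/4) <= v0 ^ j).
{ rewrite hv0j. replace (J * al) with ((J * al - 3/4) + 3/4) by ring. rewrite Rpower_plus.
  apply Rmult_le_compat_r. apply Rlt_le, Rpower_pos. lra. }
assert (hhub : forall t, In t (cart rs) ->
   2 * Rpower M (3/4) <= IZR (prodZ t) /\ 4 * ln M * IZR (prodZ t) * T <= M /\
   2 * M * (1 + 1 / ln M) <= v0 * IZR (prodZ t) * T).
{ intros t ht. destruct (cart_facts rs t ht) as [hlt [_ hmem]].
  assert (hb : v0 ^ length t <= IZR (prodZ t) <= vv j ^ length t).
  { apply prod_bounds. lra. intros x hx. destruct (hmem x hx) as [r [hr hxr]].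
    destruct (hrs r x hr hxr) as [_ [h1 h2]]. split; auto. }
  rewrite hlt, hlen in hb. destruct hb as [hb1 hb2].
  assert (hTpos : 0 < T) by lra.
  split; [lra|split].
  - rewrite hvvj, Rpower_pow_n in hb2 by lra.
    assert (e1 : M = Rpower M (1 - (J * (al + J * rh) + (1/4 - eps))) * Rpower M (J * (al + J * rh)) * T).
    { rewrite eT, <- !Rpower_plus. replace (1 - (J * (al + J * rh) + (1 / 4 - eps)) + J * (al + J * rh) + (1 / 4 - eps)) with 1 by ring.
      rewrite Rpower_1; lra. }
    rewrite <- eJ in hb2.
    assert (h4 : 4 * ln M <= Rpower M (1 - (J * (al + J * rh) + (1/4 - eps)))) by lra.
    rewrite e1 at 2.
    assert (hp0 : 0 <= IZR (prodZ t)) by (pose proof (pow_le v0 j); lra).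
    apply Rmult_le_compat_r; [lra|].
    apply Rmult_le_compat; lra.
  - assert (e1 : v0 * v0 ^ j * T = Rpower M ((J + 1) * al + (1/4 - eps) - 1) * M).
    { transitivity (Rpower M ((J + 1) * al + (1/4 - eps) - 1) * Rpower M 1).
      - rewrite hv0j, eT. unfold v0. rewrite <- !Rpower_plus. f_equal. ring.
      - rewrite Rpower_1; lra. }
    assert (h4 : 4 <= Rpower M ((J + 1) * al + (1/4 - eps) - 1)) by lra.
    assert (hil : 1 / ln M <= 1). { apply Rmult_le_reg_r with (ln M). lra. unfold Rdiv. rewrite Rmult_assoc, Rinv_l by lra. lra. }
    assert (v0 * v0 ^ j * T <= v0 * IZR (prodZ t) * T).
    { apply Rmult_le_compat_r; [lra|]. apply Rmult_le_compat_l; lra. }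
    nra. }
destruct (classic (exists t, In t (cart rs) /\ exists n, in_I M h n /\ (bigP eps M | n)%Z)) as [HB|HB].
{ right. destruct HB as [t [_ hn]]. exact hn. }
left.
assert (hall : forall t, In t (cart rs) -> exists m,
   (is_mi eps M m /\ ~ (exists n, in_I M h n /\ (m | n)%Z)) /\ Tag rs t m).
{ intros t ht. destruct (hhub t ht) as [g1 [g2 g3]].
  destruct (hub_split eps M h v0 rs t hM bT1 ltac:(change (T < IZR Tn + 1); lra) hTn hv0 hv0T hvv2 hrsT hdis ht g2 g3 g1) as [[m hm]|hn].
  - exists m. tauto.
  - exfalso. apply HB. exists t. auto. }
destruct (choose_list _ (cart rs) hall) as [lp [hlp1 hlp2]].
assert (hnd : NoDup (map fst lp)).
{ rewrite hlp1. apply cart_NoDup. apply Forall_forall. intros r hr. unfold rs in hr.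
  apply in_map_iff in hr. destruct hr as [i [e _]]. subst r. unfold R. apply NoDup_filter, zint_NoDup. }
assert (hfst : forall p, In p lp -> In (fst p) (cart rs)).
{ intros p hp. rewrite <- hlp1. apply in_map; auto. }
destruct (count_pairs (length lp) lp (le_n _) hnd) as [D [hD1 [hD2 hD3]]].
{ intros x y z hx hy hz e1 e2.
  destruct (hlp2 x hx) as [_ [_ [l hl]]]. destruct (hlp2 y hy) as [_ [hy1 _]]. destruct (hlp2 z hz) as [_ [hz1 _]].
  apply (fiber3 rs (fst x) (fst y) (fst z) l hdis); auto.
  - intros i hi. apply hl; auto. rewrite e1; auto.
  - intros i hi. apply hl; auto. rewrite e1, e2; auto. }
exists D. split; auto. split.
- intros m hm. destruct (hD2 m hm) as [p [hp ep]]. subst m. destruct (hlp2 p hp) as [hh _]. exact hh.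
- assert (hl : length lp = length (cart rs)) by (rewrite <- hlp1, length_map; auto).
  rewrite hl in hD3. apply le_INR in hD3. rewrite mult_INR in hD3. simpl in hD3. lra.
Qed.
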